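(* Let $K$ be a field, $S=K[x_1,\dots,x_n]$, $A\subseteq\{1,\dots,n\}$, $f=\prod_{j\in A}x_j$, let $J\subset I\subset S_f$ be monomial ideals, and let $t_1,\dots,t_r$ be new variables. Then $$\operatorname{sdepth}(I/J)[t_1^{\pm1},\dots,t_r^{\pm1}]=\operatorname{sdepth}(I/J)+r.$$
   Context: $S_f=K[x_1,\dots,x_n,x_j^{-1}:j\in A]$, with $K$-basis the monomials $x_1^{a_1}\cdots x_n^{a_n}$, $a_j\in\mathbb Z$ for $j\in A$, $a_j\in\mathbb N$ otherwise; monomial ideals are ideals generated by monomials, and $I/J$ has $K$-basis the monomials in $I\setminus J$. A Stanley space of $I/J$ is $uK[Z]$, the $K$-span of all $uw$ ($w$ a monomial in elements of $Z$), where $u\in I\setminus J$ is a monomial, $Z$ a subset of the variables and of the inverses of the inverted variables containing no pair $\{x_j,x_j^{-1}\}$, and $uK[Z]$ is a free $K[Z]$-submodule of $I/J$; its dimension is $|Z|$. Stanley decompositions are finite direct sums of Stanley spaces equal to $I/J$; $\operatorname{sdepth}$ of a decomposition is the minimal dimension of its spaces, and $\operatorname{sdepth}(I/J)$ the maximum over all decompositions. $(I/J)[t_1^{\pm1},\dots,t_r^{\pm1}]=IT/JT$ where $T=S_f[t_1^{\pm1},\dots,t_r^{\pm1}]$, the localization of $K[x_1,\dots,x_n,t_1,\dots,t_r]$ at $f t_1\cdots t_r$, with Stanley depth defined in the same way. *)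

(* Defs.v *)
From mathcomp Require Import all_boot all_order all_algebra.
Set Implicit Arguments. Unset Strict Implicit. Unset Printing Implicit Defensive.
Import Order.TTheory GRing.Theory Num.Theory.
Local Open Scope ring_scope.

(* Ambient ring: K[y_1..y_m, y_j^{-1} : j in inv].  A monomial is its
   exponent vector a : 'I_m -> int with a j >= 0 for j not in inv. *)
Definition mono (m : nat) (inv : {set 'I_m}) (a : 'I_m -> int) : Prop :=
  forall j, j \notin inv -> 0 <= a j.

(* A monomial ideal, represented by the set of monomials it contains:
   a set of monomials closed under multiplication by monomials. *)
Definition mideal (m : nat) (inv : {set 'I_m}) (I : ('I_m -> int) -> Prop) : Prop :=
  (forall a, I a -> mono inv a) /\
  (forall a b, I a -> mono inv b -> I (fun j => a j + b j)).

(* Z : subset of the variables (j,true) = y_j and of the inverses of inverted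
   variables (j,false) = y_j^{-1}, containing no pair {y_j, y_j^{-1}}. *)
Definition valid_Z (m : nat) (inv : {set 'I_m}) (Z : {set 'I_m * bool}) : Prop :=
  (forall j, (j, false) \in Z -> j \in inv) /\
  (forall j, ~ ((j, true) \in Z /\ (j, false) \in Z)).

(* a is a monomial of u K[Z], i.e. a = u * w with w a monomial in Z. *)
Definition in_space (m : nat) (u : 'I_m -> int) (Z : {set 'I_m * bool})
    (a : 'I_m -> int) : Prop :=
  forall j, (0 < a j - u j -> (j, true) \in Z) /\ (a j - u j < 0 -> (j, false) \in Z).

(* u K[Z] is a Stanley space of I/J: u K[Z] is a (necessarily free)
   K[Z]-submodule of I/J, i.e. all its monomials lie in I \ J. *)
Definition stanley_space (m : nat) (inv : {set 'I_m}) (I J : ('I_m -> int) -> Prop)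
    (u : 'I_m -> int) (Z : {set 'I_m * bool}) : Prop :=
  valid_Z inv Z /\ I u /\ ~ J u /\
  forall a, in_space u Z a -> I a /\ ~ J a.

(* A Stanley decomposition: finitely many Stanley spaces D i = (u_i, Z_i)
   whose (monomial) direct sum is I/J: every monomial of I \ J lies in
   exactly one of them. *)
Definition stanley_decomp (m : nat) (inv : {set 'I_m}) (I J : ('I_m -> int) -> Prop)
    (k : nat) (D : 'I_k -> ('I_m -> int) * {set 'I_m * bool}) : Prop :=
  (forall i, stanley_space inv I J (D i).1 (D i).2) /\
  (forall a, I a -> ~ J a ->
     exists i, in_space (D i).1 (D i).2 a /\
       forall i', in_space (D i').1 (D i').2 a -> i' = i).

Definition sdepth_ge (m : nat) (inv : {set 'I_m}) (I J : ('I_m -> int) -> Prop)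
    (d : nat) : Prop :=
  exists k (D : 'I_k -> ('I_m -> int) * {set 'I_m * bool}),
    stanley_decomp inv I J D /\ forall i, (d <= #|(D i).2|)%N.

Definition is_sdepth (m : nat) (inv : {set 'I_m}) (I J : ('I_m -> int) -> Prop)
    (d : nat) : Prop :=
  sdepth_ge inv I J d /\ forall e, sdepth_ge inv I J e -> (e <= d)%N.

(* Extension to T = S_f[t_1^{+-1},...,t_r^{+-1}]: variables 'I_(n + r),
   the last r (the t's) all inverted. *)
Definition ext_inv (n r : nat) (A : {set 'I_n}) : {set 'I_(n + r)} :=
  [set j | match split j with inl i => i \in A | inr _ => true end].

(* IT: monomials x^a t^b with x^a in I and b in Z^r arbitrary. *)
Definition ext_ideal (n : nat) (r : nat) (I : ('I_n -> int) -> Prop) :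
    ('I_(n + r) -> int) -> Prop :=
  fun a => I (fun i => a (lshift r i)).
Arguments ext_ideal {n} r I _.

(* Main.v *)
Require Import Defs.
From mathcomp Require Import all_boot all_order all_algebra.
From Stdlib Require Import FunctionalExtensionality.
From mathcomp Require Import zify.
Set Implicit Arguments. Unset Strict Implicit. Unset Printing Implicit Defensive.
Import Order.TTheory GRing.Theory Num.Theory.
Local Open Scope ring_scope.

Lemma splitL n r (i : 'I_n) : split (lshift r i) = inl i.
Proof. exact: (unsplitK (inl i)). Qed.
Lemma splitR n r (t : 'I_r) : split (rshift n t) = inr t.
Proof. exact: (unsplitK (inr t)). Qed.

Lemma decomp_fin (m : nat) (inv : {set 'I_m}) (I J : ('I_m -> int) -> Prop) (d : nat)
  (T : finType) (P : {pred T}) (D : T -> ('I_m -> int) * {set 'I_m * bool}) :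
  (forall i, i \in P -> stanley_space inv I J (D i).1 (D i).2) ->
  (forall i, i \in P -> (d <= #|(D i).2|)%N) ->
  (forall a, I a -> ~ J a -> exists i, i \in P /\ in_space (D i).1 (D i).2 a /\
      forall i', i' \in P -> in_space (D i').1 (D i').2 a -> i' = i) ->
  sdepth_ge inv I J d.
Proof.
move=> HS Hd Hc; exists #|P|, (fun j => D (enum_val j)); split; last first.
  by move=> j; apply: Hd; apply: enum_valP.
split; first by move=> j; apply: HS; apply: enum_valP.
move=> a Ia Ja; have [i [Pi [ai Hu]]] := Hc a Ia Ja.
exists (enum_rank_in Pi i); rewrite enum_rankK_in //; split => // j' aj'.
apply: enum_val_inj; rewrite enum_rankK_in //; apply: Hu => //; exact: enum_valP.
Qed.

Lemma ext_eq n (I : ('I_n -> int) -> Prop) (f g : 'I_n -> int) :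
  (forall i, f i = g i) -> I f -> I g.
Proof. by move=> H; have -> : f = g by apply: functional_extensionality. Qed.

Section Slice.
Variables (n r : nat) (A : {set 'I_n}) (I J : ('I_n -> int) -> Prop).

Definition liftv (v : 'I_n -> int) : 'I_(n + r) -> int :=
  fun j => match split j with inl i => v i | inr _ => 0 end.

Lemma liftvL v i : liftv v (lshift r i) = v i.
Proof. by rewrite /liftv splitL. Qed.
Lemma liftvR v t : liftv v (rshift n t) = 0.
Proof. by rewrite /liftv splitR. Qed.

Lemma ext_lift (K : ('I_n -> int) -> Prop) v : ext_ideal r K (liftv v) <-> K v.
Proof.
rewrite /ext_ideal; split; apply: ext_eq => i; by rewrite liftvL.
Qed.

Definition restZ (Z : {set 'I_(n + r) * bool}) : {set 'I_n * bool} :=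
  [set p | (lshift r p.1, p.2) \in Z].

Definition reach (u : 'I_(n + r) -> int) (Z : {set 'I_(n + r) * bool}) : bool :=
  [forall t : 'I_r, ((0 < 0 - u (rshift n t)) ==> ((rshift n t, true) \in Z)) &&
                    ((0 - u (rshift n t) < 0) ==> ((rshift n t, false) \in Z))].

Lemma in_space_rest u Z (a : 'I_(n + r) -> int) :
  in_space u Z a -> in_space (fun i => u (lshift r i)) (restZ Z) (fun i => a (lshift r i)).
Proof. by move=> H j; rewrite !inE; exact: H. Qed.

Lemma in_space_lift u Z v :
  reach u Z -> in_space (fun i => u (lshift r i)) (restZ Z) v -> in_space u Z (liftv v).
Proof.
move=> /forallP R H j; case: (split_ordP j) => [i ->|t ->].
  by rewrite liftvL; have := H i; rewrite !inE.
by rewrite liftvR; have /andP[/implyP h1 /implyP h2] := R t; split.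
Qed.

Lemma reach_of u Z v : in_space u Z (liftv v) -> reach u Z.
Proof.
move=> H; apply/forallP => t; have := H (rshift n t); rewrite liftvR => -[h1 h2].
by apply/andP; split; apply/implyP.
Qed.

Lemma card_rest (inv : {set 'I_(n + r)}) Z : valid_Z inv Z -> (#|Z| <= #|restZ Z| + r)%N.
Proof.
move=> [_ V].
pose f := fun p : 'I_n * bool => (lshift r p.1, p.2).
pose Zt := [set t : 'I_r | ((rshift n t, true) \in Z) || ((rshift n t, false) \in Z)].
pose h := fun t : 'I_r => (rshift n t, (rshift n t, true) \in Z).
have sub : Z \subset f @: restZ Z :|: h @: Zt.
  apply/subsetP => -[j b] jZ; rewrite inE; case: (split_ordP j) => [i ei|t et].
    by apply/orP; left; apply/imsetP; exists (i, b); [rewrite inE /= -ei | rewrite ei].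
  apply/orP; right; apply/imsetP; exists t.
    by rewrite inE -et; case: b jZ => ->; rewrite ?orbT.
  rewrite /h -et; case: b jZ => jZ; first by rewrite jZ.
  case E: ((j, true) \in Z) => //; by case: (V j).
apply: (leq_trans (subset_leq_card sub)); apply: (leq_trans (leq_card_setU _ _).1).
apply: leq_add; first exact: leq_imset_card.
apply: (leq_trans (leq_imset_card _ _)); rewrite -[X in (_ <= X)%N](card_ord r).
exact: max_card.
Qed.

Lemma slice (e : nat) :
  sdepth_ge (ext_inv r A) (ext_ideal r I) (ext_ideal r J) e ->
  sdepth_ge A I J (e - r).
Proof.
move=> [k [D [[HS Hc] Hd]]].
pose P := [pred i : 'I_k | reach (D i).1 (D i).2].
apply: (@decomp_fin _ _ _ _ _ _ P (fun i => (fun j => (D i).1 (lshift r j), restZ (D i).2))).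
- move=> i /= Pi; have [[V1 V2] [Iu [Ju Ha]]] := HS i; split.
    split; last by move=> j; rewrite !inE => -[h1 h2]; exact: (V2 _ (conj h1 h2)).
    by move=> j; rewrite inE => /V1; rewrite inE splitL.
  have H : forall v, in_space (fun j => (D i).1 (lshift r j)) (restZ (D i).2) v -> I v /\ ~ J v.
    move=> v /(in_space_lift Pi) /Ha [/ext_lift h1 h2]; split => //.
    by move=> jv; apply: h2; apply/ext_lift.
  have := H (fun j => (D i).1 (lshift r j)); case.
    by move=> j; rewrite subrr; split.
  by move=> h1 h2; split => //; split.
- move=> i _ /=; rewrite leq_subLR addnC; apply: leq_trans (Hd i) _.
  by have [V _] := HS i; exact: card_rest V.
- move=> a Ia Ja.
  have [i [ai Hu]] := Hc (liftv a) (proj2 (ext_lift I a) Ia) (fun h => Ja (proj1 (ext_lift J a) h)).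
  exists i; split; first exact: reach_of ai.
  split.
    move=> /= j; have := in_space_rest ai j; by rewrite liftvL.
  move=> i' Pi' ai'; apply: Hu; apply: in_space_lift => //.
Qed.
End Slice.

Section Ext.
Variables (n r : nat) (A : {set 'I_n}) (I J : ('I_n -> int) -> Prop).

Definition extu (u : 'I_n -> int) (S : {set 'I_r}) : 'I_(n + r) -> int :=
  fun j => match split j with inl i => u i | inr t => if t \in S then -1 else 0 end.

Definition extZ (Z : {set 'I_n * bool}) (S : {set 'I_r}) : {set 'I_(n + r) * bool} :=
  [set p | match split p.1 with inl i => (i, p.2) \in Z | inr t => p.2 == (t \notin S) end].

Lemma extZL (Z : {set 'I_n * bool}) (S : {set 'I_r}) i b : ((lshift r i, b) \in extZ Z S) = ((i, b) \in Z).
Proof. by rewrite inE /= splitL. Qed.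
Lemma extZR (Z : {set 'I_n * bool}) (S : {set 'I_r}) t b : ((rshift n t, b) \in extZ Z S) = (b == (t \notin S)).
Proof. by rewrite inE /= splitR. Qed.
Lemma extuL u (S : {set 'I_r}) i : extu u S (lshift r i) = u i.
Proof. by rewrite /extu splitL. Qed.
Lemma extuR u (S : {set 'I_r}) t : extu u S (rshift n t) = if t \in S then -1 else 0.
Proof. by rewrite /extu splitR. Qed.

Lemma card_extZ (Z : {set 'I_n * bool}) (S : {set 'I_r}) : (#|Z| + r <= #|extZ Z S|)%N.
Proof.
pose f := fun p : 'I_n * bool => (lshift r p.1, p.2).
pose g := fun t : 'I_r => (rshift n t, t \notin S).
have sub : f @: Z :|: g @: setT \subset extZ Z S.
  apply/subsetP => p; rewrite inE => /orP[/imsetP[q qZ ->]|/imsetP[t _ ->]].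
    by rewrite /f extZL -surjective_pairing.
  by rewrite /g extZR.
apply: leq_trans (subset_leq_card sub).
have dis : [disjoint f @: Z & g @: setT].
  rewrite -setI_eq0; apply/eqP/setP => p; rewrite !inE.
  apply/negbTE/negP => /andP[/imsetP[q _ ->] /imsetP[t _ /(congr1 fst)]] /=.
  by move/eqP; rewrite eq_lrshift.
have -> : #|f @: Z :|: g @: setT| = (#|f @: Z| + #|g @: setT|)%N by apply/eqP; rewrite (leq_card_setU _ _).2.
have finj : injective f.
  by move=> [i b] [i' b'] E; have := congr1 fst E; have := congr1 snd E; move=> /= -> /lshift_inj ->.
have ginj : injective g by move=> t t' E; exact: rshift_inj (congr1 fst E).
by rewrite (card_imset _ finj) (card_imset _ ginj) cardsT card_ord.
Qed.

Lemma in_space_extI u Z (S : {set 'I_r}) (a : 'I_(n + r) -> int) :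
  in_space u Z (fun i => a (lshift r i)) -> (forall t, (t \in S) = (a (rshift n t) < 0)) ->
  in_space (extu u S) (extZ Z S) a.
Proof.
move=> H hS j; case: (split_ordP j) => [i ->|t ->].
  by rewrite extuL !extZL; exact: H.
rewrite extuR !extZR hS; case: ifP => h /=.
  by split => // h'; lia.
by split => // h'; move/negbT: h; rewrite -leNgt => h2; lia.
Qed.

Lemma in_space_extE u Z (S : {set 'I_r}) (a : 'I_(n + r) -> int) :
  in_space (extu u S) (extZ Z S) a ->
  in_space u Z (fun i => a (lshift r i)) /\ (forall t, (t \in S) = (a (rshift n t) < 0)).
Proof.
move=> H; split.
  by move=> i; have := H (lshift r i); rewrite extuL !extZL.
move=> t; have := H (rshift n t); rewrite extuR !extZR.
case: ifP => h /= [h1 h2].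
  apply/esym; case: (ltP (a (rshift n t)) 0) => // h3.
  by have := h1 ltac:(lia).
apply/esym/negbTE; rewrite -leNgt; case: (leP 0 (a (rshift n t))) => // h3.
by have := h2 ltac:(lia).
Qed.

Lemma extend d : sdepth_ge A I J d ->
  sdepth_ge (ext_inv r A) (ext_ideal r I) (ext_ideal r J) (d + r).
Proof.
move=> [k [D [[HS Hc] Hd]]].
apply: (@decomp_fin _ _ _ _ _ _ [pred _ | true]
   (fun p : 'I_k * {set 'I_r} => (extu (D p.1).1 p.2, extZ (D p.1).2 p.2))).
- move=> [i S] _ /=; have [[V1 V2] [Iu [Ju Ha]]] := HS i.
  have Hb : forall a, in_space (extu (D i).1 S) (extZ (D i).2 S) a ->
      ext_ideal r I a /\ ~ ext_ideal r J a.
    by move=> a /in_space_extE [/Ha h _].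
  split; last first.
    have := Hb (extu (D i).1 S); case; first by move=> j; rewrite subrr ltxx.
    by move=> h1 h2; split => //; split => //; exact: Hb.
  rewrite /valid_Z; split.
    move=> j; case: (split_ordP j) => [i' ->|t ->]; rewrite ?extZL ?extZR inE ?splitL ?splitR //.
    exact: V1.
  move=> j; case: (split_ordP j) => [i' ->|t ->]; rewrite ?extZL ?extZR.
    exact: V2.
  by case: (t \in S) => -[].
- by move=> [i S] _ /=; apply: leq_trans (card_extZ _ _); rewrite leq_add2r; exact: Hd.
- move=> a Ia Ja; have [i [ai Hu]] := Hc _ Ia Ja.
  exists (i, [set t | a (rshift n t) < 0]); split => //; split.
    by apply: in_space_extI => // t; rewrite inE.
  move=> [i' S'] _ /= /in_space_extE [h1 h2].
  rewrite (Hu i' h1); congr pair; apply/setP => t; by rewrite inE h2.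
Qed.
End Ext.

Local Close Scope ring_scope.

Theorem corollary4p2 (K : fieldType) (n r : nat) (A : {set 'I_n})
    (I J : ('I_n -> int) -> Prop) :
  mideal A I -> mideal A J -> (forall a, J a -> I a) ->
  (forall d, is_sdepth A I J d ->
     is_sdepth (ext_inv r A) (ext_ideal r I) (ext_ideal r J) (d + r)) /\
  (forall e, is_sdepth (ext_inv r A) (ext_ideal r I) (ext_ideal r J) e ->
     exists d, e = (d + r)%N /\ is_sdepth A I J d).
Proof.
move=> _ _ _; split.
- move=> d [Hd Hmax]; split; first exact: (extend r).
  move=> e He; have := Hmax _ (slice He); lia.
- move=> e [He Hmax]; have Hs := slice He; exists (e - r).
  have := Hmax _ (extend r Hs) => Hr.
  split; first lia.
  split => // d' Hd'; have := Hmax _ (extend r Hd'); lia.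
Qed.
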